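(* Let $1\le n\le N$, $k\ge0$ and $L_0>8\mathrm r_0$. If the $n$-particle cubes $\Lambda^{(n)}_{L_k}(\mathbf u)$ and $\Lambda^{(n)}_{L_k}(\mathbf v)$ are both fully interactive and $\|\mathbf u-\mathbf v\|\ge 11nL_k$, then they are completely separable. Moreover, the random operators $\mathbf H^{(n)}_{\Lambda^{(n)}_{L_k}(\mathbf u)}$ and $\mathbf H^{(n)}_{\Lambda^{(n)}_{L_k}(\mathbf v)}$ are independent.
   Context: Points of $\mathbb Z^{nd}$ are $\mathbf x=(x_1,\dots,x_n)$, $x_j\in\mathbb Z^d$, with $\|x_j\|=\max_i|x_j^{(i)}|$, $\|\mathbf x\|=\max_j\|x_j\|$, $\langle x\rangle=\max\{1,\|x\|\}$. Cubes $\Lambda^{(n)}_L(\mathbf u)=\{\mathbf x\in\mathbb Z^{nd}:\|\mathbf x-\mathbf u\|\le L\}$; $L_k=L_0^{4^k}$. Projections: $\Pi_j\mathbf x=x_j$, $\Pi\Lambda=\bigcup_{j=1}^n\Pi_j\Lambda\subset\mathbb Z^d$. The random $n$-particle operator is $\mathbf H^{(n)}_\omega=\frac1g(\mathbf T+\mathbf U)+\mathbf V(\cdot,\omega)$ on $\ell^2(\mathbb Z^{nd})$ with $g\ne0$: $\mathbf T(\mathbf x,\mathbf y)=\langle y_j-x_j\rangle^{-r}$ if there is $j$ with $x_i=y_i$ for all $i\ne j$, else $0$; $\mathbf U(\mathbf x)=\sum_{j_1<j_2}U(x_{j_1},x_{j_2})$ with $U$ bounded symmetric and $U(x,x')=0$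 if $\|x-x'\|\ge\mathrm r_0$ ($\mathrm r_0\ge1$); $\mathbf V(\mathbf x,\omega)=\sum_jV(x_j,\omega)$ with $V(x,\omega)$, $x\in\mathbb Z^d$, i.i.d. real random variables. $\mathbf H^{(n)}_\Lambda$ denotes the restriction of $\mathbf H^{(n)}_\omega$ to $\Lambda$ (the matrix $(\mathbf H^{(n)}_\omega(\mathbf x,\mathbf y))_{\mathbf x,\mathbf y\in\Lambda}$). A cube $\Lambda^{(n)}_L(\mathbf u)$ is fully interactive if $\min_{x\in\mathbb Z^d}\max_{1\le j\le n}\|u_j-x\|\le2n(L+\mathrm r_0)$. Two cubes $\Lambda^{(n)}_L(\mathbf u),\Lambda^{(n)}_L(\mathbf v)$ are completely separable if $\Pi\Lambda^{(n)}_{L+\mathrm r_0}(\mathbf u)\cap\Pi\Lambda^{(n)}_{L+\mathrm r_0}(\mathbf v)=\emptyset$. *)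

(* Defs.v *)
From HB Require Import structures.
From mathcomp Require Import all_boot all_order all_algebra.
From mathcomp Require Import all_classical all_reals all_analysis.

Set Implicit Arguments.
Unset Strict Implicit.
Unset Printing Implicit Defensive.

Import Order.TTheory GRing.Theory Num.Theory.
Local Open Scope classical_set_scope.
Local Open Scope ring_scope.

Definition site (d : nat) := {ffun 'I_d -> int}.
Definition config (n d : nat) := {ffun 'I_n -> site d}.

Definition site_sub d (x y : site d) : site d := [ffun i => x i - y i].
Definition config_sub n d (x y : config n d) : config n d :=
  [ffun j => site_sub (x j) (y j)].

Definition site_norm d (x : site d) : nat := (\max_(i < d) `|x i|%N)%N.
Definition config_norm n d (x : config n d) : nat :=
  (\max_(j < n) site_norm (x j))%N.

Definition bracket (R : realType) d (x : site d) : R :=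
  Num.max 1 (site_norm x)%:R.

Definition Lscale (R : realType) (L0 : R) (k : nat) : R := L0 ^+ (4 ^ k).

Definition cube (R : realType) n d (L : R) (u : config n d) : set (config n d) :=
  [set x | ((config_norm (config_sub x u))%:R <= L)%R].

Definition proj_set n d (Lam : set (config n d)) : set (site d) :=
  [set z | exists x j, Lam x /\ x j = z].

Definition fully_interactive (R : realType) n d (r0 L : R) (u : config n d) :=
  exists x : site d,
    (((\max_(j < n) site_norm (site_sub (u j) x))%N)%:R <= 2 * n%:R * (L + r0))%R.

Definition completely_separable (R : realType) n d (r0 L : R)
    (u v : config n d) :=
  proj_set (cube (L + r0) u) `&` proj_set (cube (L + r0) v) = set0.

Definition Tkin (R : realType) n d (r : R) (x y : config n d) : R :=
  match [pick j | [forall i, (i != j) ==> (x i == y i)]] with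
  | Some j => (bracket R (site_sub (y j) (x j))) `^ (- r)
  | None => 0
  end.

Definition Uint (R : realType) n d (U : site d -> site d -> R) (x : config n d) : R :=
  \sum_(j1 < n) \sum_(j2 < n | (j1 < j2)%N) U (x j1) (x j2).

(* Matrix elements of H^{(n)}_omega = (1/g)(T + U) + V(., omega) *)
Definition Hop (R : realType) n d (Omega : Type) (g r : R)
    (U : site d -> site d -> R) (V : site d -> Omega -> R)
    (x y : config n d) (w : Omega) : R :=
  g^-1 * (Tkin r x y + (if x == y then Uint U x else 0))
  + (if x == y then \sum_(j < n) V (x j) w else 0).

Definition sigma_rv (R : realType) (Omega : Type) (X : Omega -> R) : set (set Omega) :=
  preimage_set_system setT X measurable.

(* sigma-algebra generated by the random matrix (H(x,y,.))_{x,y in Lam},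
   i.e. by the random operator H restricted to Lam *)
Definition sigma_restr (R : realType) n d (Omega : Type)
    (H : config n d -> config n d -> Omega -> R) (Lam : set (config n d))
    : set (set Omega) :=
  <<s \bigcup_(p in [set p : config n d * config n d | Lam p.1 /\ Lam p.2])
        sigma_rv (H p.1 p.2) >>.

Definition indep_sigma (R : realType) (dm : measure_display)
    (Omega : measurableType dm) (P : probability Omega R)
    (F G : set (set Omega)) :=
  forall A B, F A -> G B -> P (A `&` B) = (P A * P B)%E.

Definition iid_field (R : realType) (dm : measure_display) d
    (Omega : measurableType dm) (P : probability Omega R)
    (V : site d -> Omega -> R) :=
  [/\ forall x, measurable_fun setT (V x),
      forall x y (A : set R), measurable A ->
        P (V x @^-1` A) = P (V y @^-1` A) &
      forall (s : seq (site d)) (E : site d -> set Omega), uniq s ->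
        (forall x, x \in s -> sigma_rv (V x) (E x)) ->
        P (\bigcap_(x in [set` s]) E x) = (\prod_(x <- s) P (E x))%E].

(* Main.v *)
Require Import Defs.
From HB Require Import structures.
From mathcomp Require Import all_boot all_order all_algebra.
From mathcomp Require Import all_classical all_reals all_analysis.
From mathcomp Require Import ring lra.
Import Order.TTheory GRing.Theory Num.Theory.
Local Open Scope classical_set_scope.
Local Open Scope ring_scope.
Set Implicit Arguments. Unset Strict Implicit.

Definition sdist d (x y : site d) : nat := site_norm (site_sub x y).

Lemma sdist_tri d (x y z : site d) : (sdist x z <= sdist x y + sdist y z)%N.
Proof.
rewrite /sdist /site_norm; apply/bigmax_leqP => i _.
rewrite !ffunE; apply: (leq_trans (leqD_dist _ (y i) _)).
by apply: leq_add; apply: leq_trans (leq_bigmax i); rewrite ffunE.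
Qed.

Lemma sdist_sym d (x y : site d) : sdist x y = sdist y x.
Proof.
rewrite /sdist /site_norm; apply: eq_bigr => i _.
by rewrite !ffunE distnC.
Qed.

Lemma sdist_config n d (x u : config n d) j :
  (sdist (x j) (u j) <= config_norm (config_sub x u))%N.
Proof.
rewrite /sdist /config_norm (_ : site_sub (x j) (u j) = config_sub x u j).
  exact: (leq_bigmax j).
by rewrite ffunE.
Qed.

Lemma config_le n d (x u : config n d) m :
  (forall j, sdist (x j) (u j) <= m)%N -> (config_norm (config_sub x u) <= m)%N.
Proof.
move=> H; apply/bigmax_leqP => j _; rewrite ffunE; exact: H.
Qed.

Lemma rtri (R : realType) d (x y z : site d) :
  (sdist x z)%:R <= (sdist x y)%:R + (sdist y z)%:R :> R.
Proof. by rewrite -natrD ler_nat sdist_tri. Qed.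
Arguments rtri {R d}.

Lemma fi_bound (R : realType) n d (r0 L : R) (u : config n d) :
  fully_interactive r0 L u -> exists a, forall j,
    (sdist (u j) a)%:R <= 2 * n%:R * (L + r0) :> R.
Proof.
move=> [a Ha]; exists a => j; apply: le_trans Ha; rewrite ler_nat.
exact: (leq_bigmax j).
Qed.

Lemma cube_bound (R : realType) n d (c : R) (x u : config n d) j :
  cube c u x -> (sdist (x j) (u j))%:R <= c.
Proof. by rewrite /cube /= => H; apply: le_trans H; rewrite ler_nat sdist_config. Qed.

Lemma separable (R : realType) n d (r0 L : R) (u v : config n d) :
  1 <= r0 -> 8 * r0 < L -> (1 <= n)%N ->
  fully_interactive r0 L u -> fully_interactive r0 L v ->
  11 * n%:R * L <= (config_norm (config_sub u v))%:R ->
  completely_separable r0 L u v.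
Proof.
move=> r01 Lr n1 fu fv H.
apply/seteqP; split => // z [[x [i [cx xi]]] [y [l [cy yl]]]].
set c := L + r0 in cx cy.
have hz1 : (sdist z (u i))%:R <= c :> R by rewrite -xi; exact: cube_bound.
have hz2 : (sdist z (v l))%:R <= c :> R by rewrite -yl; exact: cube_bound.
have cn : (0 < #|'I_n|)%N by rewrite card_ord.
have [j0 Hj0] := @bigop.eq_bigmax 'I_n (fun j => site_norm (config_sub u v j)) cn.
have E : config_norm (config_sub u v) = sdist (u j0) (v j0).
  by rewrite /config_norm Hj0 ffunE.
rewrite E in H.
have c0 : 0 < c by rewrite /c; lra.
have [n1'|n2] := leqP n 1.
  have n_1 : n = 1%N by apply/eqP; rewrite eqn_leq n1' n1.
  have eij : forall a b : 'I_n, a = b.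
    move=> a b; apply: val_inj; have ha : (val a < 1)%N by rewrite -[1%N]n_1 ltn_ord.
    have hb : (val b < 1)%N by rewrite -[1%N]n_1 ltn_ord.
    by move: ha hb; rewrite !ltnS !leqn0 => /eqP-> /eqP->.
  have : (sdist (u j0) (v j0))%:R <= c + c :> R.
    rewrite (eij j0 i) (eij l i) in hz2 *; apply: le_trans (rtri _ z _) _.
    by rewrite sdist_sym; apply: lerD.
  have nR : n%:R = 1 :> R by rewrite n_1.
  move: H; rewrite nR /c => H1 H2; lra.
have [a Ha] := fi_bound fu.
have [b Hb] := fi_bound fv.
have : (sdist (u j0) (v j0))%:R <= (8 * n%:R + 2) * c :> R.
  apply: le_trans (rtri _ a _) _.
  apply: le_trans (lerD (lexx _) (rtri _ (u i) _)) _.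
  apply: le_trans (lerD (lexx _) (lerD (lexx _) (rtri _ z _))) _.
  apply: le_trans (lerD (lexx _) (lerD (lexx _) (lerD (lexx _) (rtri _ (v l) _)))) _.
  apply: le_trans (lerD (lexx _) (lerD (lexx _) (lerD (lexx _) (lerD (lexx _) (rtri _ b _))))) _.
  have h1 := Ha j0. have h2 := Ha i. have h3 := Hb l. have h4 := Hb j0.
  rewrite sdist_sym in h2. rewrite sdist_sym in h4. have h5 := hz1. rewrite sdist_sym in h5.
  set A := 2 * n%:R * c in h1 h2 h3 h4.
  have -> : (8 * n%:R + 2) * c = A + (A + (c + (c + (A + A)))) by rewrite /A; ring.
  repeat apply: lerD => //.
move: H; set D := (sdist _ _)%:R => H1 H2.
have nR : 2 <= n%:R :> R by rewrite (ler_nat R 2 n).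
rewrite /c in H2 c0.
nra.
Qed.

Lemma dynkin_indep (R : realType) (dm : measure_display)
    (Omega : measurableType dm) (P : probability Omega R) (X : set Omega) :
  measurable X ->
  dynkin [set C | measurable C /\ P (X `&` C) = (P X * P C)%E].
Proof.
move=> mX; split.
- by split => //; rewrite setIT probability_setT mule1.
- move=> C [mC HC]; split; first exact: measurableC.
  rewrite probability_setC // -setDE.
  rewrite measureD //; last by rewrite (le_lt_trans (probability_le1 _ mX)) // ltry.
  have [x [x0 Px]] : exists x : R, 0 <= x /\ P X = x%:E.
    exists (fine (P X)); rewrite fineK ?fin_num_measure //; split => //.
    by rewrite fine_ge0.
  have [y [y0 Py]] : exists y : R, 0 <= y /\ P C = y%:E.
    exists (fine (P C)); rewrite fineK ?fin_num_measure //; split => //.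
    by rewrite fine_ge0.
  have Pxy : P (X `&` C) = (x * y)%:E by rewrite HC Px Py.
  transitivity (x%:E - (x * y)%:E)%E; first by congr (_ - _)%E.
  transitivity (x%:E * (1 - y%:E))%E; last by congr (_ * (1 - _))%E.
  by rewrite -EFinB -EFinB -EFinM; congr (_%:E); ring.
- move=> F tF HF.
  have mF : forall k, measurable (F k) by move=> k; case: (HF k).
  split; first exact: bigcupT_measurable.
  rewrite setI_bigcupr measure_semi_bigcup //.
  - have [x [x0 Px]] : exists x : R, 0 <= x /\ P X = x%:E.
      exists (fine (P X)); rewrite fineK ?fin_num_measure //; split => //.
      by rewrite fine_ge0.
    transitivity (\sum_(0 <= i <oo) (x%:E * P (F i)))%E.
      apply: eq_eseriesr => k _; case: (HF k) => _ e.
      by apply: (eq_trans e); rewrite Px.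
    rewrite nneseriesZl // Px; congr (_ * _)%E.
    by rewrite measure_semi_bigcup //; exact: bigcupT_measurable.
  - by move=> k; apply: measurableI.
  - exact: trivIset_setIl.
  - by apply: bigcupT_measurable => k; apply: measurableI.
Qed.

Definition piS (R : realType) d (Omega : Type) (V : site d -> Omega -> R)
    (S : set (site d)) : set (set Omega) :=
  [set A | exists (s : seq (site d)) (B : site d -> set R),
     [/\ uniq s, (forall x, x \in s -> S x), (forall x, measurable (B x)) &
         A = \bigcap_(x in [set` s]) (V x @^-1` B x)]].

Lemma piS_setI (R : realType) d (Omega : Type) (V : site d -> Omega -> R)
    (S : set (site d)) : setI_closed (piS V S).
Proof.
move=> _ _ [s [B [us sS mB ->]]] [s' [B' [us' sS' mB' ->]]].
exists (undup (s ++ s')),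
  (fun x => (if x \in s then B x else setT) `&` (if x \in s' then B' x else setT)).
split.
- exact: undup_uniq.
- by move=> x; rewrite mem_undup mem_cat => /orP[]; [exact: sS|exact: sS'].
- by move=> x; apply: measurableI; case: ifP.
- apply/seteqP; split => w /=.
  + move=> [h1 h2] x /=; rewrite mem_undup mem_cat => hx.
    by split; case: ifPn => // xs; [exact: h1|exact: h2].
  + move=> h; split => x /= xs.
    * have := h x; rewrite /= mem_undup mem_cat xs /= => /(_ isT) [].
    * have hx : x \in undup (s ++ s') by rewrite mem_undup mem_cat; apply/orP; left.
      have [+ _] := h x hx; case: ifPn => // /negP; exact.
    * have hx : x \in undup (s ++ s') by rewrite mem_undup mem_cat; apply/orP; right.
      have [_ +] := h x hx; case: ifPn => // /negP; exact.
Qed.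

Lemma piS_meas (R : realType) (dm : measure_display) d
    (Omega : measurableType dm) (V : site d -> Omega -> R) (S : set (site d)) :
  (forall x, measurable_fun setT (V x)) ->
  forall A, piS V S A -> measurable A.
Proof.
move=> mV _ [s [B [us sS mB ->]]].
apply: fin_bigcap_measurable; first exact: finite_seq.
by move=> x _; rewrite -[X in measurable X]setTI; apply: mV.
Qed.

Lemma piS_prod (R : realType) (dm : measure_display) d
    (Omega : measurableType dm) (P : probability Omega R)
    (V : site d -> Omega -> R) (S1 S2 : set (site d)) :
  iid_field P V -> (forall z, S1 z -> S2 z -> False) ->
  forall A C, piS V S1 A -> piS V S2 C -> P (A `&` C) = (P A * P C)%E.
Proof.
move=> [mV _ hind] disj _ _ [s [B [us sS mB ->]]] [s' [B' [us' sS' mB' ->]]].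
have key : forall s0 (B0 : site d -> set R), uniq s0 -> (forall x, measurable (B0 x)) ->
    P (\bigcap_(x in [set` s0]) (V x @^-1` B0 x)) = (\prod_(x <- s0) P (V x @^-1` B0 x))%E.
  move=> s0 B0 us0 mB0; apply: hind => // x _; exists (B0 x) => //; by rewrite setTI.
set B2 := fun x => if x \in s then B x else B' x.
have dj : forall x, x \in s' -> x \in s = false.
  move=> x xs'; apply/negP => xs; exact: disj x (sS x xs) (sS' x xs').
have -> : (\bigcap_(x in [set` s]) (V x @^-1` B x)) `&`
          (\bigcap_(x in [set` s']) (V x @^-1` B' x)) =
          \bigcap_(x in [set` s ++ s']) (V x @^-1` B2 x).
  apply/seteqP; split => w /=.
  + move=> [h1 h2] x /=; rewrite mem_cat /B2 => /orP[] xs.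
      by rewrite xs; exact: h1.
    by rewrite dj //; exact: h2.
  + move=> h; split => x /= xs.
      by have := h x; rewrite /= mem_cat xs /B2 /= => /(_ isT); rewrite xs.
    by have := h x; rewrite /= mem_cat xs orbT /B2 /= => /(_ isT); rewrite dj.
have ucat : uniq (s ++ s').
  rewrite cat_uniq us us' andbT /=; apply/hasPn => x xs'; rewrite dj //.
rewrite key //; last by move=> x; rewrite /B2; case: ifP.
rewrite key // key // big_cat /=; congr (_ * _)%E; apply: eq_big_seq => x xs.
  by rewrite /B2 xs.
by rewrite /B2 dj.
Qed.

Lemma indep_gen (R : realType) (dm : measure_display) d
    (Omega : measurableType dm) (P : probability Omega R)
    (V : site d -> Omega -> R) (S1 S2 : set (site d)) :
  iid_field P V -> (forall z, S1 z -> S2 z -> False) ->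
  forall A C, <<s piS V S1>> A -> <<s piS V S2>> C -> P (A `&` C) = (P A * P C)%E.
Proof.
move=> iid disj.
have mV := iid; case: mV => mV _ _.
have gmeas : forall S, <<s piS V S>> `<=` measurable.
  move=> S; apply: smallest_sub; first exact: sigma_algebra_measurable.
  exact: piS_meas.
have step1 : forall C, piS V S2 C ->
    <<s piS V S1>> `<=` [set A | measurable A /\ P (A `&` C) = (P A * P C)%E].
  move=> C hC; apply: lambda_system_subset => //.
  - exact: piS_setI.
  - apply/dynkin_lambda_system.
    have -> : [set A | measurable A /\ P (A `&` C) = (P A * P C)%E] =
              [set A | measurable A /\ P (C `&` A) = (P C * P A)%E].
      by apply/seteqP; split => A [mA e]; split => //; rewrite setIC muleC.
    by apply: dynkin_indep; exact: piS_meas hC.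
  - move=> A hA; split; first exact: piS_meas hA.
    exact: piS_prod hA hC.
move=> A C hA hC.
suff : [set C | measurable C /\ P (A `&` C) = (P A * P C)%E] C by case.
move: C hC; apply: lambda_system_subset => //.
- exact: piS_setI.
- apply/dynkin_lambda_system; apply: dynkin_indep; exact: gmeas hA.
- by move=> C hC; split; [exact: piS_meas hC | case: (step1 C hC A hA)].
Qed.

Lemma restr_sub (R : realType) (dm : measure_display) n d
    (Omega : measurableType dm) (g r : R) (U : site d -> site d -> R)
    (V : site d -> Omega -> R) (Lam : set (config n d)) :
  (forall x, measurable_fun setT (V x)) ->
  sigma_restr (Hop g r U V) Lam `<=` <<s piS V (proj_set Lam)>>.
Proof.
move=> mV; apply: smallest_sub; first exact: smallest_sigma_algebra.
move=> A [[x y] /= [hx hy] hA].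
case: hA => B mB <-.
pose T := g_sigma_algebraType (piS V (proj_set Lam)).
have mVz : forall z, proj_set Lam z -> measurable_fun (setT : set T) (V z : T -> R).
  move=> z hz _ Y mY; apply: sub_sigma_algebra.
  exists [:: z], (fun _ => Y); split => //.
  - by move=> x'; rewrite inE => /eqP ->.
  - apply/seteqP; split => w /=.
    + by move=> [_ h] x'; rewrite /= inE => /eqP ->.
    + by move=> h; split => //; apply: h; rewrite /= inE.
have mH : measurable_fun (setT : set T) (Hop g r U V x y : T -> R).
  rewrite /Hop; apply: measurable_realfun.measurable_funD; first exact: measurable_cst.
  case: eqP => exy; last exact: measurable_cst.
  apply: measurable_sum => j; apply: mVz; exists x, j; split => //.
exact: mH.
Qed.

Unset Implicit Arguments. Set Strict Implicit.

Theorem lemma3p7 (R : realType) (dm : measure_display)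
    (Omega : measurableType dm) (P : probability Omega R)
    (d N n k : nat) (g r r0 L0 : R)
    (U : site d -> site d -> R) (V : site d -> Omega -> R)
    (u v : config n d) :
  g != 0 ->
  1 <= r0 ->
  (exists M : R, forall x x', `|U x x'| <= M) ->
  (forall x x', U x x' = U x' x) ->
  (forall x x', r0 <= (site_norm (site_sub x x'))%:R -> U x x' = 0) ->
  iid_field P V ->
  (1 <= n)%N -> (n <= N)%N ->
  8 * r0 < L0 ->
  fully_interactive r0 (Lscale L0 k) u ->
  fully_interactive r0 (Lscale L0 k) v ->
  11 * n%:R * Lscale L0 k <= (config_norm (config_sub u v))%:R ->
  completely_separable r0 (Lscale L0 k) u v /\
  indep_sigma P
    (sigma_restr (Hop g r U V) (cube (Lscale L0 k) u))
    (sigma_restr (Hop g r U V) (cube (Lscale L0 k) v)).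
Proof.
Proof.
move=> g0 r01 _ _ _ iid n1 nN L0r fu fv H.
have LL0 : L0 <= Lscale L0 k.
  rewrite /Lscale; apply: ler_eXnr; first by rewrite expn_gt0.
  lra.
have Lr : 8 * r0 < Lscale L0 k by lra.
have cs := separable r01 Lr n1 fu fv H.
split => //.
move=> A B hA hB.
have [mV _ _] := iid.
apply: (@indep_gen R dm d Omega P V (proj_set (cube (Lscale L0 k) u))
          (proj_set (cube (Lscale L0 k) v)) iid).
- move=> z [x [i [cx xi]]] [y [l [cy yl]]].
  have : (proj_set (cube (Lscale L0 k + r0) u) `&` proj_set (cube (Lscale L0 k + r0) v)) z.
    split.
      exists x, i; split => //; apply: le_trans cx _; rewrite lerDl; lra.
    exists y, l; split => //; apply: le_trans cy _; rewrite lerDl; lra.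
  by rewrite cs.
- exact: (restr_sub mV hA).
- exact: (restr_sub mV hB).
Qed.
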